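(* Every proper metric space (i.e. one whose closed balls are compact) has property (P) for nets.
   Context: For a nonempty subset $C$ of a metric space $X$, ${\rm cov}(C)$ is the intersection of all closed balls of $X$ containing $C$. Property (P) for nets: for any directed (pre)ordered index set $(I,\le)$ and any two bounded nets $\{x_s\}_{s\in I}$, $\{z_s\}_{s\in I}$ in $X$ with $z_s\in{\rm cov}(\{x_j:j\ge s\})$ for every $s$, there is $z\in\bigcap_s{\rm cov}(\{z_j:j\ge s\})$ such that $\limsup_s d(z,x_s)\le\limsup_t\limsup_s d(z_t,x_s)$. *)

(* Defs.v *)
From mathcomp Require Import all_boot all_order all_algebra.
From mathcomp Require Import all_classical all_reals all_analysis.
Set Implicit Arguments. Unset Strict Implicit. Unset Printing Implicit Defensive.
Import Order.TTheory GRing.Theory Num.Theory.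
Local Open Scope classical_set_scope.
Local Open Scope ring_scope.

Section MetricDefs.
Variables (R : realType) (X : Type) (d : X -> X -> R).

Definition is_metric : Prop :=
  (forall x y, 0 <= d x y) /\
  (forall x y, d x y = 0 <-> x = y) /\
  (forall x y, d x y = d y x) /\
  (forall x y z, d x z <= d x y + d y z).

Definition cball (c : X) (r : R) : set X := [set y | d c y <= r].
Definition oball (c : X) (r : R) : set X := [set y | d c y < r].

Definition mopen (U : set X) : Prop :=
  forall x, U x -> exists2 e : R, 0 < e & oball x e `<=` U.

Definition mcompact (K : set X) : Prop :=
  forall F : set (set X), (forall U, F U -> mopen U) ->
    K `<=` \bigcup_(U in F) U ->
    exists (n : nat) (G : nat -> set X),
      (forall i, (i < n)%N -> F (G i)) /\ K `<=` \bigcup_(i in `I_n) G i.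

Definition proper_metric : Prop := forall c r, mcompact (cball c r).

Definition mbounded (A : set X) : Prop := exists c r, A `<=` cball c r.

Definition cov (C : set X) : set X :=
  [set y | forall c r, C `<=` cball c r -> cball c r y].

End MetricDefs.

Definition directed_preorder (I : Type) (le : I -> I -> Prop) : Prop :=
  (exists i : I, True) /\
  (forall i, le i i) /\
  (forall i j k, le i j -> le j k -> le i k) /\
  (forall i j, exists k, le i k /\ le j k).

Definition tail (I : Type) (le : I -> I -> Prop) (s : I) : set I := [set j | le s j].

Definition net_limsup (R : realType) (I : Type) (le : I -> I -> Prop)
  (f : I -> \bar R) : \bar R :=
  ereal_inf (range (fun s => ereal_sup (f @` tail le s))).

Local Open Scope ereal_scope.

Definition propertyP (R : realType) (X : Type) (d : X -> X -> R) : Prop :=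
  forall (I : Type) (le : I -> I -> Prop), directed_preorder le ->
  forall (x z : I -> X),
    mbounded d (range x) -> mbounded d (range z) ->
    (forall s, cov d (x @` tail le s) (z s)) ->
    exists w : X,
      (forall s, cov d (z @` tail le s) w) /\
      net_limsup le (fun s => (d w (x s))%:E) <=
        net_limsup le (fun t => net_limsup le (fun s => (d (z t) (x s))%:E)).

(* Main.v *)
Require Import Defs.
From mathcomp Require Import all_boot all_order all_algebra.
From mathcomp Require Import all_classical all_reals all_analysis.
Set Implicit Arguments. Unset Strict Implicit. Unset Printing Implicit Defensive.
Import Order.TTheory GRing.Theory Num.Theory.
Local Open Scope classical_set_scope.
Local Open Scope ring_scope.

Section Aux.
Variables (R : realType) (X : Type) (d : X -> X -> R).
Hypothesis hd : is_metric d.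

Lemma oball_open y e : mopen d (oball d y e).
Proof.
case: hd => [d0 [dxx [dsym dtri]]].
move=> u /= hu; exists (e - d y u); first by rewrite subr_gt0.
move=> v /= hv; apply: (le_lt_trans (dtri y u v)).
by rewrite -ltrBrDl.
Qed.

Lemma cluster_exists (I : Type) (le : I -> I -> Prop) :
  directed_preorder le -> proper_metric d ->
  forall z : I -> X, mbounded d (range z) ->
  exists w, forall e, 0 < e -> forall s, exists t, le s t /\ d w (z t) < e.
Proof.
case: hd => [d0 [dxx [dsym dtri]]].
move=> [[s0 _] [lerefl [letr ledir]]] hp z [c [r hcr]].
apply: contrapT => Hn.
have H2 : forall w, exists e, 0 < e /\ exists s, forall t, le s t -> e <= d w (z t).
  move=> w; apply: contrapT => Hn1; apply: Hn; exists w => e e0 s.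
  apply: contrapT => Hn2; apply: Hn1; exists e; split => //; exists s => t hst.
  rewrite leNgt; apply/negP => hlt; apply: Hn2; exists t; by split.
have [E HE] := choice H2.
have H3 : forall w, exists s, forall t, le s t -> E w <= d w (z t).
  by move=> w; case: (HE w) => _.
have [S HS] := choice H3.
pose F := [set U | exists y, U = oball d y (E y)].
have [n [G [HG Hcov]]] : exists (n : nat) (G : nat -> set X),
      (forall i, (i < n)%N -> F (G i)) /\ cball d c r `<=` \bigcup_(i in `I_n) G i.
  apply: hp.
    by move=> U [y ->]; apply: oball_open.
  move=> k _; exists (oball d k (E k)); first by exists k.
  by rewrite /oball /= (proj2 (dxx k k) erefl); case: (HE k).
have H4 : forall i, exists y, (i < n)%N -> G i = oball d y (E y).
  move=> i; case: (ltnP i n) => hi.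
    by case: (HG i hi) => y ->; exists y.
  by exists (z s0).
have [Y HY] := choice H4.
have H5 : forall m, exists s, forall i, (i < m)%N -> le (S (Y i)) s.
  elim => [|m [s Hs]]; first by exists s0.
  case: (ledir s (S (Y m))) => k [h1 h2]; exists k => i; rewrite ltnS leq_eqVlt.
  case/orP => [/eqP -> //|/Hs h]; exact: letr h h1.
case: (H5 n) => s Hs.
have : cball d c r (z s) by apply: hcr; exists s.
move/Hcov => [i /= hi]; rewrite (HY i hi) /oball /= => hlt.
have := HS (Y i) s (Hs i hi).
by rewrite leNgt hlt.
Qed.

End Aux.

Local Open Scope ereal_scope.

Theorem lemma5p2 (R : realType) (X : Type) (d : X -> X -> R) :
  is_metric d -> proper_metric d -> propertyP d.
Proof.
move=> hd hp I le hdir x z hbx hbz hcov.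
have [w Hw] := cluster_exists hd hdir hp hbz.
have hd' := hd.
case: hd' => [d0 [dxx [dsym dtri]]].
case: hdir => [[s0 _] [lerefl [letr ledir]]].
exists w; split.
  move=> s c r hcr /=; apply/ler_addgt0Pr => e e0.
  case: (Hw e e0 s) => t [hst hwt].
  apply: (le_trans (dtri c (z t) w)); apply: lerD.
    by apply: hcr; exists t.
  by rewrite dsym ltW.
apply: le_ereal_inf_tmp => _ [s0' _ <-].
apply/lee_addgt0Pr => e e0.
case: (Hw e e0 s0') => t [hst hwt].
set f := fun t0 => net_limsup le (fun s => (d (z t0) (x s))%:E).
have hft : f t <= ereal_sup (f @` tail le s0') by apply: ereal_sup_ubound; exists t.
apply: (@le_trans _ _ ((d w (z t))%:E + f t)); last first.
  rewrite addeC; apply: leeD => //; by rewrite lee_fin ltW.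
rewrite -leeBlDl //; apply: le_ereal_inf_tmp => _ [s _ <-].
rewrite leeBlDl //.
apply: (@le_trans _ _ (ereal_sup ((fun s1 => (d w (x s1))%:E) @` tail le s))).
  by apply: ereal_inf_lbound; exists s.
apply: ge_ereal_sup => _ [j hj <-].
apply: (@le_trans _ _ ((d w (z t))%:E + (d (z t) (x j))%:E)).
  by rewrite -EFinD lee_fin.
apply: leeD2l; apply: ereal_sup_ubound; by exists j.
Qed.
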